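(* Let $V=V(\alpha_1)\otimes\cdots\otimes V(\alpha_d)$ be a standard $U_q(\widehat{\mathfrak{sl}}_2)$-module with feasible diameter $d\ge1$. Let $\zeta_1$ be the scalar by which $LR$ acts on $U_0$ and $\zeta_1^\times$ the scalar by which $RL$ acts on $U_d$. Then (i) $\zeta_1=uu^*q^{-1}\sum_{i=1}^d\alpha_i+vv^*q^3\sum_{i=1}^d\alpha_i^{-1}-(q-q^{-1})(q^d-q^{-d})(bb^*q^{1-d}+cc^*q^{d-1})$; (ii) $\zeta_1^\times=uu^*q^{-1}\sum_{i=1}^d\alpha_i+vv^*q^3\sum_{i=1}^d\alpha_i^{-1}-(q-q^{-1})(q^d-q^{-d})(bb^*q^{d-1}+cc^*q^{1-d})$; (iii) $\zeta_1-\zeta_1^\times=(q-q^{-1})(q^{d-1}-q^{1-d})(q^d-q^{-d})(bb^*-cc^* )$.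
   Context: Let $\mathbb F$ be an algebraically closed field and fix nonzero $q\in\mathbb F$ with $q^2\ne1$; write $[n]_q=(q^n-q^{-n})/(q-q^{-1})$. $U_q(\widehat{\mathfrak{sl}}_2)$ is the associative unital $\mathbb F$-algebra with generators $e_i^{\pm},K_i^{\pm1}$ ($i\in\{0,1\}$) and relations $K_iK_i^{-1}=K_i^{-1}K_i=1$, $K_0K_1=K_1K_0$, $K_ie_i^{\pm}K_i^{-1}=q^{\pm2}e_i^{\pm}$, $K_ie_j^{\pm}K_i^{-1}=q^{\mp2}e_j^{\pm}$ ($i\ne j$), $e_i^+e_i^--e_i^-e_i^+=(K_i-K_i^{-1})/(q-q^{-1})$, $e_0^{\pm}e_1^{\mp}=e_1^{\mp}e_0^{\pm}$, and $(e_i^\pm)^3e_j^\pm-[3]_q(e_i^\pm)^2e_j^\pm e_i^\pm+[3]_qe_i^\pm e_j^\pm(e_i^\pm)^2-e_j^\pm(e_i^\pm)^3=0$ ($i\ne j$). Tensor products of modules are formed via $e_i^+(v\otimes w)=e_i^+v\otimes K_iw+v\otimes e_i^+w$, $e_i^-(v\otimes w)=e_i^-v\otimes w+K_i^{-1}v\otimes e_i^-w$, $K_i(v\otimes w)=K_iv\otimes K_iw$. For nonzero $\alpha\in\mathbb F$, $V(\alpha)$ is the module with basis $x,y$ and $K_1x=qx$, $K_1y=q^{-1}y$, $e_1^-x=y$, $e_1^-y=0$, $e_1^+x=0$, $e_1^+y=x$, $K_0x=q^{-1}x$, $K_0y=qy$, $e_0^-x=0$, $e_0^-y=q\alpha^{-1}x$,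 $e_0^+x=q^{-1}\alpha y$, $e_0^+y=0$. A standard module of diameter $d$ is $V(\alpha_1)\otimes\cdots\otimes V(\alpha_d)$ with all $\alpha_i\in\mathbb F$ nonzero. An integer $d$ is feasible if $d\ge0$ and $q^{2i}\ne1$ for $1\le i\le d$. For a standard $V$ of diameter $d$, $U_0$ is the $1$-dimensional span of $x\otimes\cdots\otimes x$ and $U_d$ the $1$-dimensional span of $y\otimes\cdots\otimes y$. Fix nonzero $b,c,b^*,c^*\in\mathbb F$ and $u,v,u^*,v^*\in\mathbb F$ with $uv^*=-bb^*q^{-1}(q-q^{-1})^2$ and $vu^*=-cc^*q^{-1}(q-q^{-1})^2$; set $R=ue_0^++ve_1^-K_1$ and $L=u^*e_1^++v^*e_0^-K_0$. ($LR$ maps $U_0$ into itself and $RL$ maps $U_d$ into itself.) *)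

(* Defs.v *)
From HB Require Import structures.
From mathcomp Require Import all_boot all_order all_algebra.
Set Implicit Arguments. Unset Strict Implicit. Unset Printing Implicit Defensive.
Import Order.TTheory GRing.Theory Num.Theory.
Local Open Scope ring_scope.

Section Uq.
Variable F : fieldType.

(* Kronecker (tensor) product of matrices: the basis of F^m (x) F^p is indexed
   by pairs ('I_m * 'I_p), enumerated and cast into 'I_(m * p). *)
Definition pidx m p (k : 'I_(m * p)) : 'I_m * 'I_p :=
  enum_val (cast_ord (esym (mxvec_cast m p)) k).

Definition kron m n p r (A : 'M[F]_(m, n)) (B : 'M[F]_(p, r)) : 'M[F]_(m * p, n * r) :=
  \matrix_(k, l) (A (pidx k).1 (pidx l).1 * B (pidx k).2 (pidx l).2).

(* A finite-dimensional U_q(sl2^) module on F^n, given by the matrices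
   (acting on column vectors) of e_0^+, e_0^-, e_1^+, e_1^-, K_0, K_1,
   K_0^{-1}, K_1^{-1}. *)
Record umod (n : nat) := UMod {
  E0p : 'M[F]_n; E0m : 'M[F]_n; E1p : 'M[F]_n; E1m : 'M[F]_n;
  K0 : 'M[F]_n; K1 : 'M[F]_n; K0i : 'M[F]_n; K1i : 'M[F]_n }.

Definition tens m n (M : umod m) (N : umod n) : umod (m * n) :=
  UMod (kron (E0p M) (K0 N) + kron 1%:M (E0p N))
       (kron (E0m M) 1%:M + kron (K0i M) (E0m N))
       (kron (E1p M) (K1 N) + kron 1%:M (E1p N))
       (kron (E1m M) 1%:M + kron (K1i M) (E1m N))
       (kron (K0 M) (K0 N)) (kron (K1 M) (K1 N))
       (kron (K0i M) (K0i N)) (kron (K1i M) (K1i N)).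

Definition triv : umod 1 := UMod 0 0 0 0 1%:M 1%:M 1%:M 1%:M.

(* 2x2 matrix with entries a b / c d (row, column), basis x = index 0, y = index 1 *)
Definition mx2 (a b c e : F) : 'M[F]_2 :=
  \matrix_(i, j) (if (i == 0 :> nat) then (if (j == 0 :> nat) then a else b)
                  else (if (j == 0 :> nat) then c else e)).

Definition Valpha (q alpha : F) : umod 2 :=
  UMod (mx2 0 0 (q^-1 * alpha) 0)   (* e0+ x = q^-1 alpha y, e0+ y = 0 *)
       (mx2 0 (q * alpha^-1) 0 0)   (* e0- x = 0, e0- y = q alpha^-1 x *)
       (mx2 0 1 0 0)                (* e1+ x = 0, e1+ y = x *)
       (mx2 0 0 1 0)                (* e1- x = y, e1- y = 0 *)
       (mx2 q^-1 0 0 q)             (* K0 x = q^-1 x, K0 y = q y *)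
       (mx2 q 0 0 q^-1)             (* K1 x = q x, K1 y = q^-1 y *)
       (mx2 q 0 0 q^-1)
       (mx2 q^-1 0 0 q).

Fixpoint dimV (d : nat) : nat := if d is d'.+1 then (dimV d' * 2)%N else 1%N.

Fixpoint stdmod (q : F) (alpha : nat -> F) (d : nat) : umod (dimV d) :=
  if d is d'.+1 then tens (stdmod q alpha d') (Valpha q (alpha d)) else triv.

Definition x2 : 'cV[F]_2 := \col_i (if (i == 0 :> nat) then 1 else 0).
Definition y2 : 'cV[F]_2 := \col_i (if (i == 0 :> nat) then 0 else 1).

Fixpoint xvec (d : nat) : 'cV[F]_(dimV d) :=
  if d is d'.+1 then kron (xvec d') x2 else 1%:M.
Fixpoint yvec (d : nat) : 'cV[F]_(dimV d) :=
  if d is d'.+1 then kron (yvec d') y2 else 1%:M.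

Definition Rop n (M : umod n) (u v : F) : 'M[F]_n := u *: E0p M + v *: (E1m M *m K1 M).
Definition Lop n (M : umod n) (us vs : F) : 'M[F]_n := us *: E1p M + vs *: (E0m M *m K0 M).

End Uq.

(* Main.v *)
Require Import Defs.
From HB Require Import structures.
From mathcomp Require Import all_boot all_order all_algebra.
From Stdlib Require Import Ring Field.
Import GRing.Theory.
Set Implicit Arguments. Unset Strict Implicit.
Local Open Scope ring_scope.

Section Fld.
Variable F : fieldType.
Definition fT : Type := GRing.Field.sort F.
Definition fadd (x y : fT) : fT := x + y.
Definition fmul (x y : fT) : fT := x * y.
Definition fopp (x : fT) : fT := - x.
Definition finv (x : fT) : fT := x^-1.
Definition fsub (x y : fT) : fT := x - y.
Definition fdiv (x y : fT) : fT := x / y.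
Definition fzero : fT := 0.
Definition fone : fT := 1.
Lemma fTh : @field_theory fT fzero fone fadd fmul fsub fopp fdiv finv eq.
Proof.
split. split.
- exact: add0r. - exact: addrC. - exact: addrA. - exact: mul1r. - exact: mulrC.
- exact: mulrA. - exact: mulrDl. - by []. - exact: subrr.
- by apply/eqP; rewrite oner_eq0.
- by [].
- by move=> x /eqP H; rewrite /fmul /finv mulVf.
Qed.
Lemma eqfT (a b : fT) : a = b -> a = b. Proof. by []. Qed.
End Fld.
Arguments fadd {F}. Arguments fmul {F}. Arguments fopp {F}. Arguments finv {F}.
Arguments fone {F}. Arguments fzero {F}.

Ltac tofld := repeat rewrite -/(fadd _ _); repeat rewrite -/(fmul _ _);
  repeat rewrite -/(fopp _); repeat rewrite -/(finv _);
  repeat rewrite -/fone; repeat rewrite -/fzero; apply: eqfT.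

Section Kron.
Variable F : fieldType.

Lemma pidx_idx m p (i : 'I_m) (j : 'I_p) : pidx (mxvec_index i j) = (i, j).
Proof. by rewrite /pidx /mxvec_index cast_ordK enum_rankK. Qed.

Lemma kronE m n p r (A : 'M[F]_(m, n)) (B : 'M[F]_(p, r)) i j i' j' :
  kron A B (mxvec_index i j) (mxvec_index i' j') = A i i' * B j j'.
Proof. by rewrite /kron mxE !pidx_idx. Qed.

Lemma kron_mul m n p r s t (A : 'M[F]_(m, n)) (B : 'M[F]_(p, r))
   (C : 'M[F]_(n, s)) (D : 'M[F]_(r, t)) :
  kron A B *m kron C D = kron (A *m C) (B *m D).
Proof.
apply/matrixP => k l.
case/mxvec_indexP: k => i j; case/mxvec_indexP: l => i' j'.
rewrite kronE !mxE.
rewrite (reindex (uncurry (@mxvec_index n r))) /=; last first.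
  by apply: onW_bij; apply: onT_bij; exact: curry_mxvec_bij.
rewrite big_distrl /=.
rewrite (eq_bigr (fun a => \sum_(b < r) A i a * C a i' * (B j b * D b j'))); last first.
  by move=> a _; rewrite big_distrr.
rewrite pair_bigA /=; apply: eq_bigr => [[a b]] _ /=.
rewrite !kronE.
by rewrite mulrA -(mulrA (A i a)) (mulrC (B j b)) !mulrA.
Qed.

Lemma kron_mulv m n p r (A : 'M[F]_(m, n)) (B : 'M[F]_(p, r))
   (v : 'cV[F]_n) (w : 'cV[F]_r) :
  kron A B *m (kron v w : 'cV_(n * r)) = (kron (A *m v) (B *m w) : 'cV_(m * p)).
Proof. exact: (@kron_mul m n p r 1 1 A B v w). Qed.

Lemma kronDl m n p r (A A' : 'M[F]_(m, n)) (B : 'M[F]_(p, r)) :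
  kron (A + A') B = kron A B + kron A' B.
Proof. by apply/matrixP => k l; rewrite !mxE mulrDl. Qed.
Lemma kronDr m n p r (A : 'M[F]_(m, n)) (B B' : 'M[F]_(p, r)) :
  kron A (B + B') = kron A B + kron A B'.
Proof. by apply/matrixP => k l; rewrite !mxE mulrDr. Qed.
Lemma kronZl m n p r a (A : 'M[F]_(m, n)) (B : 'M[F]_(p, r)) :
  kron (a *: A) B = a *: kron A B.
Proof. by apply/matrixP => k l; rewrite !mxE mulrA. Qed.
Lemma kronZr m n p r a (A : 'M[F]_(m, n)) (B : 'M[F]_(p, r)) :
  kron A (a *: B) = a *: kron A B.
Proof. by apply/matrixP => k l; rewrite !mxE mulrCA. Qed.
Lemma kron0l m n p r (B : 'M[F]_(p, r)) : kron (0 : 'M[F]_(m, n)) B = 0.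
Proof. by apply/matrixP => k l; rewrite !mxE mul0r. Qed.
Lemma kron0r m n p r (A : 'M[F]_(m, n)) : kron A (0 : 'M[F]_(p, r)) = 0.
Proof. by apply/matrixP => k l; rewrite !mxE mulr0. Qed.

Lemma kron_neq0 m p (v : 'cV[F]_m) (w : 'cV[F]_p) : v != 0 -> w != 0 -> kron v w != 0.
Proof.
move=> /eqP Hv /eqP Hw; apply/eqP => H.
have /existsP [i Hi] : [exists i, v i 0 != 0].
  case: (boolP [exists i, v i 0 != 0]) => // /existsPn H'; exfalso; apply: Hv.
  by apply/matrixP => a b; rewrite (ord1 b) mxE; move: (H' a); rewrite negbK => /eqP.
have /existsP [j Hj] : [exists j, w j 0 != 0].
  case: (boolP [exists j, w j 0 != 0]) => // /existsPn H'; exfalso; apply: Hw.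
  by apply/matrixP => a b; rewrite (ord1 b) mxE; move: (H' a); rewrite negbK => /eqP.
move/matrixP: H => /(_ (mxvec_index i j) (mxvec_index 0 0)).
by rewrite kronE mxE => /eqP; rewrite mulf_eq0 (negbTE Hi) (negbTE Hj).
Qed.

Lemma mx2x (a b c e : F) : mx2 a b c e *m x2 F = a *: x2 F + c *: y2 F.
Proof.
apply/colP => i; rewrite !mxE big_ord_recl big_ord1 !mxE.
by case: i => [[|[|]]] //= _; rewrite ?mulr1 ?mulr0 ?addr0 ?add0r.
Qed.
Lemma mx2y (a b c e : F) : mx2 a b c e *m y2 F = b *: x2 F + e *: y2 F.
Proof.
apply/colP => i; rewrite !mxE big_ord_recl big_ord1 !mxE.
by case: i => [[|[|]]] //= _; rewrite ?mulr1 ?mulr0 ?addr0 ?add0r.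
Qed.
End Kron.


Section Main.
Variable F : fieldType.
Add Field fF : (fTh F).
Variable q : F.
Hypothesis Hq : q != 0.

Lemma qk_neq0 k : q ^+ k != 0. Proof. by rewrite expf_neq0. Qed.

Record xgood n (M : umod F n) (v : 'cV[F]_n) (k : nat) (P Q S T : F) : Prop := XGood {
 xK0 : K0 M *m v = (q^+k)^-1 *: v;
 xK1 : K1 M *m v = q^+k *: v;
 xK0i : K0i M *m v = q^+k *: v;
 xK1i : K1i M *m v = (q^+k)^-1 *: v;
 xE1p : E1p M *m v = 0;
 xE0m : E0m M *m v = 0;
 xP : E1p M *m (E0p M *m v) = P *: v;
 xQ : E1p M *m (E1m M *m v) = Q *: v;
 xS : E0m M *m (E0p M *m v) = S *: v;
 xT : E0m M *m (E1m M *m v) = T *: v;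
 xK0a : K0 M *m (E0p M *m v) = (q * q / q^+k) *: (E0p M *m v);
 xK0b : K0 M *m (E1m M *m v) = (q * q / q^+k) *: (E1m M *m v) }.

Lemma xstep n (M : umod F n) v k P Q S T a : a != 0 ->
  xgood M v k P Q S T ->
  xgood (tens M (Valpha q a)) (kron v (x2 F)) k.+1
    (P + q^-1 * a) (q * Q + (q^+k)^-1) (q^-1 * S + q^+k) (T + q * a^-1).
Proof.
move=> Ha [h1 h2 h3 h4 h5 h6 h7 h8 h9 h10 h11 h12].
have /eqP Hq' := Hq. have /eqP Ha' := Ha. have /eqP Hp := qk_neq0 k.
split; rewrite /tens /Valpha /=;
repeat progress rewrite ?mulmxDl ?mulmxDr ?kron_mulv ?mul1mx ?mx2x ?mx2y -?scalemxAr ?scale1r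
  ?kronZl ?kronZr ?kronDl ?kronDr ?kron0l ?kron0r ?mulmx0 ?mul0mx ?scaler0 ?scale0r
  ?addr0 ?add0r ?scalerA ?scalerDr ?h1 ?h2 ?h3 ?h4 ?h5 ?h6 ?h7 ?h8 ?h9 ?h10 ?h11 ?h12.
all: rewrite ?exprS; set p := q^+k.
all: rewrite -?scalerDl; try done.
all: first [congr (_ *: _ + _ *: _) | congr (_ *: _)].
all: tofld; field.
all: try (repeat split; assumption).
Qed.

Record ygood n (M : umod F n) (v : 'cV[F]_n) (k : nat) (P Q S T : F) : Prop := YGood {
 yK0 : K0 M *m v = q^+k *: v;
 yK1 : K1 M *m v = (q^+k)^-1 *: v;
 yK0i : K0i M *m v = (q^+k)^-1 *: v;
 yK1i : K1i M *m v = q^+k *: v;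
 yE0p : E0p M *m v = 0;
 yE1m : E1m M *m v = 0;
 yP : E0p M *m (E1p M *m v) = P *: v;
 yQ : E0p M *m (E0m M *m v) = Q *: v;
 yS : E1m M *m (E1p M *m v) = S *: v;
 yT : E1m M *m (E0m M *m v) = T *: v;
 yK1a : K1 M *m (E1p M *m v) = (q * q / q^+k) *: (E1p M *m v);
 yK1b : K1 M *m (E0m M *m v) = (q * q / q^+k) *: (E0m M *m v) }.

Lemma ystep n (M : umod F n) v k P Q S T a : a != 0 ->
  ygood M v k P Q S T ->
  ygood (tens M (Valpha q a)) (kron v (y2 F)) k.+1
    (P + q^-1 * a) (q * Q + (q^+k)^-1) (q^-1 * S + q^+k) (T + q * a^-1).
Proof.
move=> Ha [h1 h2 h3 h4 h5 h6 h7 h8 h9 h10 h11 h12].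
have /eqP Hq' := Hq. have /eqP Ha' := Ha. have /eqP Hp := qk_neq0 k.
split; rewrite /tens /Valpha /=;
repeat progress rewrite ?mulmxDl ?mulmxDr ?kron_mulv ?mul1mx ?mx2x ?mx2y -?scalemxAr ?scale1r
  ?kronZl ?kronZr ?kronDl ?kronDr ?kron0l ?kron0r ?mulmx0 ?mul0mx ?scaler0 ?scale0r
  ?addr0 ?add0r ?scalerA ?scalerDr ?h1 ?h2 ?h3 ?h4 ?h5 ?h6 ?h7 ?h8 ?h9 ?h10 ?h11 ?h12.
all: rewrite ?exprS; set p := q^+k.
all: rewrite -?scalerDl; try done.
all: first [congr (_ *: _ + _ *: _) | congr (_ *: _)].
all: tofld; field.
all: try (repeat split; assumption).
Qed.

Lemma xbase : xgood (triv F) (1%:M : 'cV[F]_1) 0 0 0 0 0.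
Proof.
by split; rewrite /triv /= ?mul1mx ?mul0mx ?expr0 ?invr1 ?scale1r ?scale0r ?scaler0.
Qed.
Lemma ybase : ygood (triv F) (1%:M : 'cV[F]_1) 0 0 0 0 0.
Proof.
by split; rewrite /triv /= ?mul1mx ?mul0mx ?expr0 ?invr1 ?scale1r ?scale0r ?scaler0.
Qed.

Variable alpha : nat -> F.
Fixpoint Pf d := if d is d'.+1 then Pf d' + q^-1 * alpha d else 0.
Fixpoint Qf d := if d is d'.+1 then q * Qf d' + (q^+d')^-1 else 0.
Fixpoint Sf d := if d is d'.+1 then q^-1 * Sf d' + q^+d' else 0.
Fixpoint Tf d := if d is d'.+1 then Tf d' + q * (alpha d)^-1 else 0.

Lemma xall d : (forall i : nat, (1 <= i <= d)%N -> alpha i != 0) ->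
  xgood (stdmod q alpha d) (xvec F d) d (Pf d) (Qf d) (Sf d) (Tf d).
Proof.
elim: d => [|d IH] H; first exact: xbase.
apply: xstep; first by apply: H; rewrite leqnn.
by apply: IH => i /andP [h1 h2]; apply: H; rewrite h1 (leq_trans h2).
Qed.
Lemma yall d : (forall i : nat, (1 <= i <= d)%N -> alpha i != 0) ->
  ygood (stdmod q alpha d) (yvec F d) d (Pf d) (Qf d) (Sf d) (Tf d).
Proof.
elim: d => [|d IH] H; first exact: ybase.
apply: ystep; first by apply: H; rewrite leqnn.
by apply: IH => i /andP [h1 h2]; apply: H; rewrite h1 (leq_trans h2).
Qed.

Lemma x2_neq0 : x2 F != 0.
Proof. by apply/negP => /eqP/colP/(_ 0); rewrite !mxE /= => /eqP; rewrite oner_eq0. Qed.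
Lemma y2_neq0 : y2 F != 0.
Proof. by apply/negP => /eqP/colP/(_ 1); rewrite !mxE /= => /eqP; rewrite oner_eq0. Qed.
Lemma xvec_neq0 d : xvec F d != 0.
Proof. elim: d => [|d IH] /=; first exact: oner_neq0. exact: kron_neq0 IH x2_neq0. Qed.
Lemma yvec_neq0 d : yvec F d != 0.
Proof. elim: d => [|d IH] /=; first exact: oner_neq0. exact: kron_neq0 IH y2_neq0. Qed.

Lemma Pf_sum d : Pf d = q^-1 * \sum_(1 <= i < d.+1) alpha i.
Proof.
elim: d => [|d IH] /=; first by rewrite big_geq ?mulr0.
by rewrite IH [in RHS]big_nat_recr //= mulrDr.
Qed.
Lemma Tf_sum d : Tf d = q * \sum_(1 <= i < d.+1) (alpha i)^-1.
Proof.
elim: d => [|d IH] /=; first by rewrite big_geq ?mulr0.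
by rewrite IH [in RHS]big_nat_recr //= mulrDr.
Qed.
Lemma Qf_cl d : Qf d * (q - q^-1) = q^+d - (q^+d)^-1.
Proof.
have /eqP Hq' := Hq.
elim: d => [|d IH] /=; first by rewrite mul0r expr0 invr1 subrr.
have /eqP Hp := qk_neq0 d.
rewrite mulrDl -mulrA IH exprS. set p := q^+d. tofld. field. split; assumption.
Qed.
Lemma Sf_cl d : Sf d * (q - q^-1) = q^+d - (q^+d)^-1.
Proof.
have /eqP Hq' := Hq.
elim: d => [|d IH] /=; first by rewrite mul0r expr0 invr1 subrr.
have /eqP Hp := qk_neq0 d.
rewrite mulrDl -mulrA IH exprS. set p := q^+d. tofld. field. split; assumption.
Qed.
End Main.

Section Final.
Variable F : fieldType.
Add Field fF2 : (fTh F).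
Variables (q : F) (alpha : nat -> F) (u v us vs : F).
Hypothesis Hq : q != 0.

Lemma LRx d : (forall i : nat, (1 <= i <= d)%N -> alpha i != 0) ->
  (Lop (stdmod q alpha d) us vs *m Rop (stdmod q alpha d) u v) *m xvec F d =
  (us * u * Pf q alpha d + us * v * q^+d * Qf q d + vs * u * (q * q / q^+d) * Sf q d
   + vs * v * q^+d * (q * q / q^+d) * Tf q alpha d) *: xvec F d.
Proof.
move=> H; have [h1 h2 h3 h4 h5 h6 h7 h8 h9 h10 h11 h12] := xall Hq H.
rewrite /Rop /Lop -mulmxA.
repeat progress rewrite ?mulmxDl ?mulmxDr -?scalemxAr -?scalemxAl -?mulmxA ?scalerA ?scalerDr
  ?h1 ?h2 ?h3 ?h4 ?h5 ?h6 ?h7 ?h8 ?h9 ?h10 ?h11 ?h12 ?mulmx0 ?scaler0 ?addr0 ?add0r.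
rewrite -!scalerDl; congr (_ *: _).
set p := q^+d; set P := Pf q alpha d; set Q := Qf q d; set S := Sf q d; set T := Tf q alpha d.
tofld; ring.
Qed.

Lemma RLy d : (forall i : nat, (1 <= i <= d)%N -> alpha i != 0) ->
  (Rop (stdmod q alpha d) u v *m Lop (stdmod q alpha d) us vs) *m yvec F d =
  (u * us * Pf q alpha d + u * vs * q^+d * Qf q d + v * us * (q * q / q^+d) * Sf q d
   + v * vs * q^+d * (q * q / q^+d) * Tf q alpha d) *: yvec F d.
Proof.
move=> H; have [h1 h2 h3 h4 h5 h6 h7 h8 h9 h10 h11 h12] := yall Hq H.
rewrite /Rop /Lop -mulmxA.
repeat progress rewrite ?mulmxDl ?mulmxDr -?scalemxAr -?scalemxAl -?mulmxA ?scalerA ?scalerDr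
  ?h1 ?h2 ?h3 ?h4 ?h5 ?h6 ?h7 ?h8 ?h9 ?h10 ?h11 ?h12 ?mulmx0 ?scaler0 ?addr0 ?add0r.
rewrite -!scalerDl; congr (_ *: _).
set p := q^+d; set P := Pf q alpha d; set Q := Qf q d; set S := Sf q d; set T := Tf q alpha d.
tofld; ring.
Qed.

Lemma Qf_eq d : q ^+ 2 != 1 -> Qf q d = (q^+d - (q^+d)^-1) / (q - q^-1).
Proof.
move=> H2; have Hn : q - q^-1 != 0.
  apply/negP => /eqP E; move/eqP: H2; apply.
  by move/eqP: E; rewrite subr_eq0 => /eqP E; rewrite expr2 {2}E mulfV.
by rewrite -(Qf_cl Hq) mulfK.
Qed.
Lemma Sf_eq d : q ^+ 2 != 1 -> Sf q d = (q^+d - (q^+d)^-1) / (q - q^-1).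
Proof.
move=> H2; have Hn : q - q^-1 != 0.
  apply/negP => /eqP E; move/eqP: H2; apply.
  by move/eqP: E; rewrite subr_eq0 => /eqP E; rewrite expr2 {2}E mulfV.
by rewrite -(Sf_cl Hq) mulfK.
Qed.

Lemma scal_x d (b c bs cs : F) : q ^+ 2 != 1 -> (1 <= d)%N ->
  u * vs = - b * bs * q^-1 * (q - q^-1) ^+ 2 ->
  v * us = - c * cs * q^-1 * (q - q^-1) ^+ 2 ->
  us * u * Pf q alpha d + us * v * q^+d * Qf q d + vs * u * (q * q / q^+d) * Sf q d
   + vs * v * q^+d * (q * q / q^+d) * Tf q alpha d =
  u * us * q^-1 * (\sum_(1 <= i < d.+1) alpha i)
             + v * vs * q ^+ 3 * (\sum_(1 <= i < d.+1) (alpha i)^-1)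
             - (q - q^-1) * (q ^+ d - q ^- d) * (b * bs * q ^- d.-1 + c * cs * q ^+ d.-1).
Proof.
move=> H2 Hd Huv Hvu.
have -> : us * v * q^+d * Qf q d = (v * us) * (q^+d * Qf q d) by tofld; ring.
have -> : vs * u * (q * q / q^+d) * Sf q d = (u * vs) * ((q * q / q^+d) * Sf q d) by tofld; ring.
rewrite Huv Hvu (Qf_eq _ H2) (Sf_eq _ H2) Pf_sum Tf_sum.
case: d Hd => [|e] // _ /=.
have /eqP Hq' := Hq. have /eqP Hp := qk_neq0 Hq e.
rewrite !exprS !expr0 ?mulr1.
set p := q^+e in Hp *; set A := \sum_(1 <= i < e.+2) alpha i; set B := \sum_(1 <= i < e.+2) (alpha i)^-1.
clearbody p A B.
have Hqq : q * q - 1 <> 0 by apply/eqP; rewrite subr_eq0 -expr2.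
tofld. field.
repeat split; try assumption; exact Hqq.
Qed.

Lemma scal_y d (b c bs cs : F) : q ^+ 2 != 1 -> (1 <= d)%N ->
  u * vs = - b * bs * q^-1 * (q - q^-1) ^+ 2 ->
  v * us = - c * cs * q^-1 * (q - q^-1) ^+ 2 ->
  u * us * Pf q alpha d + u * vs * q^+d * Qf q d + v * us * (q * q / q^+d) * Sf q d
   + v * vs * q^+d * (q * q / q^+d) * Tf q alpha d =
  u * us * q^-1 * (\sum_(1 <= i < d.+1) alpha i)
             + v * vs * q ^+ 3 * (\sum_(1 <= i < d.+1) (alpha i)^-1)
             - (q - q^-1) * (q ^+ d - q ^- d) * (b * bs * q ^+ d.-1 + c * cs * q ^- d.-1).
Proof.
move=> H2 Hd Huv Hvu.
have -> : u * vs * q^+d * Qf q d = (u * vs) * (q^+d * Qf q d) by tofld; ring.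
have -> : v * us * (q * q / q^+d) * Sf q d = (v * us) * ((q * q / q^+d) * Sf q d) by tofld; ring.
rewrite Huv Hvu (Qf_eq _ H2) (Sf_eq _ H2) Pf_sum Tf_sum.
case: d Hd => [|e] // _ /=.
have /eqP Hq' := Hq. have /eqP Hp := qk_neq0 Hq e.
rewrite !exprS !expr0 ?mulr1.
set p := q^+e in Hp *; set A := \sum_(1 <= i < e.+2) alpha i; set B := \sum_(1 <= i < e.+2) (alpha i)^-1.
clearbody p A B.
have Hqq : q * q - 1 <> 0 by apply/eqP; rewrite subr_eq0 -expr2.
tofld. field.
repeat split; try assumption; exact Hqq.
Qed.

Lemma scal_diff d (b c bs cs : F) : (1 <= d)%N ->
  (u * us * q^-1 * (\sum_(1 <= i < d.+1) alpha i)
             + v * vs * q ^+ 3 * (\sum_(1 <= i < d.+1) (alpha i)^-1)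
             - (q - q^-1) * (q ^+ d - q ^- d) * (b * bs * q ^- d.-1 + c * cs * q ^+ d.-1))
  - (u * us * q^-1 * (\sum_(1 <= i < d.+1) alpha i)
             + v * vs * q ^+ 3 * (\sum_(1 <= i < d.+1) (alpha i)^-1)
             - (q - q^-1) * (q ^+ d - q ^- d) * (b * bs * q ^+ d.-1 + c * cs * q ^- d.-1))
  = (q - q^-1) * (q ^+ d.-1 - q ^- d.-1) * (q ^+ d - q ^- d) * (b * bs - c * cs).
Proof.
case: d => [|e] // _ /=.
have /eqP Hq' := Hq. have /eqP Hp := qk_neq0 Hq e.
rewrite !exprS.
set p := q^+e in Hp *; set A := \sum_(1 <= i < e.+2) alpha i; set B := \sum_(1 <= i < e.+2) (alpha i)^-1.
set r := q^+2. clearbody p A B r.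
tofld. field.
repeat split; assumption.
Qed.

Lemma scal_inj n (x : 'cV[F]_n) a a' : x != 0 -> a *: x = a' *: x -> a = a'.
Proof.
move=> Hx E; apply/eqP; rewrite -subr_eq0; apply/eqP.
have : (a - a') *: x = 0 by rewrite scalerBl E subrr.
by move/eqP; rewrite scaler_eq0 (negbTE Hx) orbF => /eqP.
Qed.
End Final.

Theorem lemma7p17 (F : closedFieldType) (q : F) (d : nat) (alpha : nat -> F)
    (b c bs cs u v us vs : F) :
  q != 0 -> q ^+ 2 != 1 ->
  (* d feasible, d >= 1 *)
  (1 <= d)%N -> (forall i : nat, (1 <= i <= d)%N -> q ^+ (2 * i) != 1) ->
  (forall i : nat, (1 <= i <= d)%N -> alpha i != 0) ->
  b != 0 -> c != 0 -> bs != 0 -> cs != 0 ->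
  u * vs = - b * bs * q^-1 * (q - q^-1) ^+ 2 ->
  v * us = - c * cs * q^-1 * (q - q^-1) ^+ 2 ->
  let V := stdmod q alpha d in
  let R := Rop V u v in
  let L := Lop V us vs in
  (exists z, (L *m R) *m xvec F d = z *: xvec F d) /\
  (exists z, (R *m L) *m yvec F d = z *: yvec F d) /\
  forall z1 z1x : F,
    (L *m R) *m xvec F d = z1 *: xvec F d ->
    (R *m L) *m yvec F d = z1x *: yvec F d ->
    [/\ z1 = u * us * q^-1 * (\sum_(1 <= i < d.+1) alpha i)
             + v * vs * q ^+ 3 * (\sum_(1 <= i < d.+1) (alpha i)^-1)
             - (q - q^-1) * (q ^+ d - q ^- d) * (b * bs * q ^- d.-1 + c * cs * q ^+ d.-1),
        z1x = u * us * q^-1 * (\sum_(1 <= i < d.+1) alpha i)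
             + v * vs * q ^+ 3 * (\sum_(1 <= i < d.+1) (alpha i)^-1)
             - (q - q^-1) * (q ^+ d - q ^- d) * (b * bs * q ^+ d.-1 + c * cs * q ^- d.-1)
      & z1 - z1x = (q - q^-1) * (q ^+ d.-1 - q ^- d.-1) * (q ^+ d - q ^- d) * (b * bs - c * cs)].
Proof.
move=> Hq H2 Hd _ Ha _ _ _ _ Huv Hvu V R L.
rewrite /L /R /V.
split; first by eexists; exact: (LRx u v us vs Hq Ha).
split; first by eexists; exact: (RLy u v us vs Hq Ha).
move=> z1 z1x E1 E2.
have Z1 : z1 = _ := scal_inj (xvec_neq0 F d) (etrans (esym E1) (LRx u v us vs Hq Ha)).
have Z2 : z1x = _ := scal_inj (yvec_neq0 F d) (etrans (esym E2) (RLy u v us vs Hq Ha)).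
rewrite (scal_x alpha Hq H2 Hd Huv Hvu) in Z1.
rewrite (scal_y alpha Hq H2 Hd Huv Hvu) in Z2.
split => //.
by rewrite Z1 Z2 (scal_diff alpha u v us vs Hq b c bs cs Hd).
Qed.
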